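(* Let $M,N$ be relatively prime positive integers. Then every unit norm tight frame $\Phi=\{\varphi_n\}_{n=1}^N\subseteq\mathbb{R}^M$ yields almost injective intensity measurements, i.e., the map $\mathcal{A}\colon\mathbb{R}^M/\{\pm1\}\to\mathbb{R}^N$, $(\mathcal{A}(x))(n):=|\langle x,\varphi_n\rangle|^2$, satisfies $\mathcal{A}^{-1}(\mathcal{A}(x))=\{\pm x\}$ for almost every $x\in\mathbb{R}^M$.
   Context: A unit norm tight frame is a collection $\{\varphi_n\}_{n=1}^N\subseteq\mathbb{R}^M$ with $\|\varphi_n\|=1$ for all $n$ and a constant $A>0$ such that $\sum_{n=1}^N|\langle x,\varphi_n\rangle|^2=A\|x\|^2$ for all $x\in\mathbb{R}^M$ (equivalently $\Phi\Phi^*=\frac{N}{M}I$ where $\Phi$ is the matrix with columns $\varphi_n$). *)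

(* Defs.v *)
From HB Require Import structures.
From mathcomp Require Import all_boot all_order all_algebra.
From mathcomp Require Import reals.
Set Implicit Arguments. Unset Strict Implicit. Unset Printing Implicit Defensive.
Import Order.TTheory GRing.Theory Num.Theory.
Local Open Scope ring_scope.

Definition dotp (R : realType) (M : nat) (x y : 'rV[R]_M) : R :=
  \sum_(i < M) x 0 i * y 0 i.

Definition enorm (R : realType) (M : nat) (x : 'rV[R]_M) : R :=
  Num.sqrt (dotp x x).

Definition unit_norm_tight_frame (R : realType) (M N : nat)
    (Phi : 'I_N -> 'rV[R]_M) : Prop :=
  (forall n, enorm (Phi n) = 1) /\
  exists A : R, 0 < A /\
    forall x : 'rV[R]_M,
      \sum_(n < N) `|dotp x (Phi n)| ^+ 2 = A * enorm x ^+ 2.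

Definition intensity (R : realType) (M N : nat)
    (Phi : 'I_N -> 'rV[R]_M) (x : 'rV[R]_M) : 'I_N -> R :=
  fun n => `|dotp x (Phi n)| ^+ 2.

Definition in_box (R : realType) (M : nat) (a b x : 'rV[R]_M) : Prop :=
  forall i, a 0 i <= x 0 i <= b 0 i.

Definition box_vol (R : realType) (M : nat) (a b : 'rV[R]_M) : R :=
  \prod_(i < M) (b 0 i - a 0 i).

Definition lebesgue_null (R : realType) (M : nat) (S : 'rV[R]_M -> Prop) : Prop :=
  forall e : R, 0 < e ->
    exists a b : nat -> 'rV[R]_M,
      (forall k i, a k 0 i <= b k 0 i) /\
      (forall x, S x -> exists k, in_box (a k) (b k) x) /\
      (forall K, \sum_(k < K) box_vol (a k) (b k) <= e).

Definition ae_rV (R : realType) (M : nat) (P : 'rV[R]_M -> Prop) : Prop :=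
  lebesgue_null (fun x => ~ P x).

(* Main.v *)
From HB Require Import structures.
From mathcomp Require Import all_boot all_order all_algebra.
From mathcomp Require Import reals.
From mathcomp Require Import ring lra.
From Stdlib Require Import IndefiniteDescription Classical.
Require Import Defs.
Set Implicit Arguments. Unset Strict Implicit. Unset Printing Implicit Defensive.
Import Order.TTheory GRing.Theory Num.Theory.
Local Open Scope ring_scope.

Lemma dotpE (R : realType) M (x y : 'rV[R]_M) : dotp x y = (x *m y^T) 0 0.
Proof. by rewrite /dotp !mxE; apply: eq_bigr => i _; rewrite !mxE. Qed.

Lemma dotpC (R : realType) M (x y : 'rV[R]_M) : dotp x y = dotp y x.
Proof. by rewrite /dotp; apply: eq_bigr => i _; rewrite mulrC. Qed.

Lemma dotp_self_eq0 (R : realType) M (x : 'rV[R]_M) : dotp x x = 0 -> x = 0.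
Proof.
move=> h; apply/rowP => i; rewrite mxE.
have := @psumr_eq0P R _ predT (fun i => x 0 i * x 0 i).
have hp : forall j, predT j -> 0 <= x 0 j * x 0 j by move=> j _; rewrite -expr2 sqr_ge0.
move=> /(_ hp h i isT) /eqP; rewrite mulf_eq0 orbb => /eqP //.
Qed.

Definition Amx (R : realType) M N (Phi : 'I_N -> 'rV[R]_M) (S : {set 'I_N})
  : 'M[R]_(N, M) := \matrix_(n, i) (if n \in S then Phi n 0 i else 0).

Definition Fmx (R : realType) M N (Phi : 'I_N -> 'rV[R]_M) (S : {set 'I_N})
  : 'M[R]_M := (Amx Phi S)^T *m Amx Phi S.

Lemma FmxE (R : realType) M N (Phi : 'I_N -> 'rV[R]_M) (S : {set 'I_N}) i j :
  Fmx Phi S i j = \sum_n (if n \in S then Phi n 0 i * Phi n 0 j else 0).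
Proof.
rewrite /Fmx !mxE; apply: eq_bigr => n _; rewrite !mxE.
by case: (n \in S); rewrite ?mulr0.
Qed.

Lemma Fmx_split (R : realType) M N (Phi : 'I_N -> 'rV[R]_M) (S : {set 'I_N}) :
  Fmx Phi S + Fmx Phi (~: S) = Fmx Phi setT.
Proof.
apply/matrixP => i j; rewrite [LHS]mxE !FmxE -big_split /=.
apply: eq_bigr => n _; rewrite in_setC in_setT.
by case: (n \in S); rewrite /= ?addr0 ?add0r.
Qed.

Lemma dotp_delta (R : realType) M (i : 'I_M) (y : 'rV[R]_M) :
  dotp (delta_mx 0 i) y = y 0 i.
Proof.
rewrite /dotp (bigD1 i) //= big1 ?addr0; first by rewrite mxE !eqxx mul1r.
by move=> k /negPf hk; rewrite mxE hk andbF mul0r.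
Qed.

Lemma dotpDl (R : realType) M (x y z : 'rV[R]_M) : dotp (x + y) z = dotp x z + dotp y z.
Proof. by rewrite /dotp -big_split; apply: eq_bigr => i _; rewrite mxE mulrDl. Qed.

Lemma FmxT (R : realType) M N (Phi : 'I_N -> 'rV[R]_M) (a : R) :
  (forall x, \sum_n dotp x (Phi n) ^+ 2 = a * dotp x x) ->
  Fmx Phi setT = a%:M.
Proof.
move=> ht; have Fii : forall i, Fmx Phi setT i i = a.
  move=> i; rewrite FmxE; have := ht (delta_mx 0 i).
  rewrite dotp_delta mxE !eqxx mulr1 => <-.
  by apply: eq_bigr => n _; rewrite in_setT dotp_delta expr2.
apply/matrixP => i j; rewrite [RHS]mxE.
case: eqP => [<-|/eqP hij]; first by rewrite Fii.
have := ht (delta_mx 0 i + delta_mx 0 j).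
rewrite dotpDl !dotp_delta !mxE !eqxx (negPf hij) eq_sym (negPf hij) /=.
under eq_bigr => n _ do rewrite dotpDl !dotp_delta sqrrD.
rewrite !big_split /=.
have -> : \sum_i0 Phi i0 0 i ^+ 2 = a.
  by rewrite -(Fii i) FmxE; apply: eq_bigr => n _; rewrite in_setT expr2.
have -> : \sum_i0 Phi i0 0 j ^+ 2 = a.
  by rewrite -(Fii j) FmxE; apply: eq_bigr => n _; rewrite in_setT expr2.
set s := \sum_(i0 < N) Phi i0 0 i * Phi i0 0 j.
move=> h; have hs : s = 0 by lra.
rewrite mulr0n -[RHS]hs /s; by apply: eq_bigr => n _; rewrite !mxE in_setT.
Qed.

Lemma Amx_perp (R : realType) M N (Phi : 'I_N -> 'rV[R]_M) (S : {set 'I_N}) (u : 'rV[R]_M) :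
  (forall n, n \in S -> dotp u (Phi n) = 0) -> Amx Phi S *m u^T = 0.
Proof.
move=> h; apply/matrixP => n k; rewrite !mxE.
case: (boolP (n \in S)) => hn.
  rewrite -[RHS](h n hn) dotpC /dotp; apply: eq_bigr => i _; rewrite !mxE hn.
  by rewrite (ord1 k).
by apply: big1 => i _; rewrite !mxE (negPf hn) mul0r.
Qed.

Lemma sub_perp (R : realType) M N (Phi : 'I_N -> 'rV[R]_M) (S : {set 'I_N}) (u c : 'rV[R]_M) :
  (forall n, n \in S -> dotp u (Phi n) = 0) -> (c <= Amx Phi S)%MS ->
  dotp c u = 0.
Proof.
move=> h /submxP [w ->]; rewrite dotpE -mulmxA Amx_perp // mulmx0 mxE //.
Qed.

Lemma XF1 (R : realType) M N (Phi : 'I_N -> 'rV[R]_M) (S : {set 'I_N}) (a : R) k (X : 'M[R]_(k, M)) :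
  (Amx Phi S :&: Amx Phi (~: S))%MS = 0 ->
  Fmx Phi S + Fmx Phi (~: S) = a%:M ->
  (X <= Amx Phi S)%MS -> X *m Fmx Phi S = a *: X.
Proof.
move=> cap0 hF hX.
have h2 : X *m Fmx Phi (~: S) = a *: X - X *m Fmx Phi S.
  have -> : Fmx Phi (~: S) = a%:M - Fmx Phi S by rewrite -hF addrAC subrr add0r.
  by rewrite mulmxBr mul_mx_scalar.
have s2 : (X *m Fmx Phi (~: S) <= Amx Phi (~: S))%MS by rewrite /Fmx mulmxA submxMl.
have s1 : (X *m Fmx Phi (~: S) <= Amx Phi S)%MS.
  rewrite h2 addmx_sub ?scalemx_sub //.
  by rewrite (eqmx_opp (X *m Fmx Phi S)) /Fmx mulmxA submxMl.
have : (X *m Fmx Phi (~: S) <= (Amx Phi S :&: Amx Phi (~: S)))%MS by rewrite sub_capmx s1 s2.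
rewrite cap0 submx0 h2 subr_eq0 => /eqP <- //.
Qed.

Lemma trF_rank (R : realType) M N (Phi : 'I_N -> 'rV[R]_M) (S : {set 'I_N}) (a : R) :
  (forall k (X : 'M[R]_(k, M)), (X <= Amx Phi S)%MS -> X *m Fmx Phi S = a *: X) ->
  \tr (Fmx Phi S) = a * (\rank (Amx Phi S))%:R.
Proof.
move=> hX.
set A1 := Amx Phi S; set B := row_base A1.
have hBA : (B <= A1)%MS by rewrite eq_row_base.
have hAB : (A1 <= B)%MS by rewrite eq_row_base.
set W := A1 *m pinvmx B.
have hA1 : W *m B = A1 by rewrite /W mulmxKpV.
set G := W^T *m W.
have hF : Fmx Phi S = B^T *m G *m B.
  have -> : Fmx Phi S = (W *m B)^T *m (W *m B) by rewrite hA1.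
  by rewrite trmx_mul /G !mulmxA.
have hBG : B *m B^T *m G = a%:M.
  apply: (row_free_inj (row_base_free A1)).
  by rewrite mul_scalar_mx -(hX _ B hBA) hF !mulmxA.
by rewrite hF mxtrace_mulC mulmxA hBG mxtrace_scalar mulr_natr.
Qed.

Lemma trF_card (R : realType) M N (Phi : 'I_N -> 'rV[R]_M) (S : {set 'I_N}) :
  (forall n, dotp (Phi n) (Phi n) = 1) ->
  \tr (Fmx Phi S) = #|S|%:R.
Proof.
move=> hn; rewrite /Fmx mxtrace_mulC /mxtrace.
rewrite (eq_bigr (fun n => if n \in S then 1 else 0)); last first.
  move=> n _; rewrite mxE -(hn n) /dotp.
  case: (boolP (n \in S)) => hS.
    by apply: eq_bigr => i _; rewrite !mxE hS.
  by rewrite big1 // => i _; rewrite !mxE (negPf hS) mul0r.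
by rewrite -big_mkcond /= sumr_const.
Qed.

Lemma perp_sub_eq0 (R : realType) M N (Phi : 'I_N -> 'rV[R]_M) (S : {set 'I_N}) (u : 'rV[R]_M) :
  (forall n, n \in S -> dotp u (Phi n) = 0) -> (u <= Amx Phi S)%MS -> u = 0.
Proof. by move=> h hu; apply: dotp_self_eq0; apply: (sub_perp h hu). Qed.

Lemma la_main (R : realType) M N (Phi : 'I_N -> 'rV[R]_M) (a : R) :
  0 < a -> Fmx Phi setT = a%:M -> (forall n, dotp (Phi n) (Phi n) = 1) ->
  coprime M N ->
  forall (S : {set 'I_N}) (u v : 'rV[R]_M), u != 0 -> v != 0 ->
  (forall n, n \in S -> dotp u (Phi n) = 0) ->
  (forall n, n \notin S -> dotp v (Phi n) = 0) ->
  exists c : 'rV[R]_M, c != 0 /\ (c <= Amx Phi S)%MS /\ (c <= Amx Phi (~: S))%MS.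
Proof.
move=> ha hFT hn hcop S u v hu hv huS hvS.
set C := (Amx Phi S :&: Amx Phi (~: S))%MS.
case: (eqVneq C 0) => [cap0|capn0]; last first.
  have : [exists i, row i C != 0].
    apply: contraNT capn0 => /existsPn h; apply/eqP/row_matrixP => i.
    by rewrite row0; apply/eqP; move: (h i); rewrite negbK.
  move=> /existsP [i hi]; exists (row i C); split => //.
  by apply/andP; rewrite -sub_capmx row_sub.
exfalso.
have hvS' : forall n, n \in ~: S -> dotp v (Phi n) = 0.
  by move=> n; rewrite in_setC; apply: hvS.
have hF : Fmx Phi S + Fmx Phi (~: S) = a%:M by rewrite Fmx_split.
have cap0' : (Amx Phi (~: S) :&: Amx Phi (~: ~: S))%MS = 0.
  by rewrite setCK capmxC.
have hF' : Fmx Phi (~: S) + Fmx Phi (~: ~: S) = a%:M by rewrite setCK addrC.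
have t1 := trF_rank (fun k X hX => XF1 cap0 hF hX).
have t2 := trF_rank (fun k X hX => XF1 cap0' hF' hX).
rewrite !trF_card // in t1 t2.
set r1 := \rank (Amx Phi S) in t1; set r2 := \rank (Amx Phi (~: S)) in t2.
have hsum : (r1 + r2)%N = M.
  rewrite -mxrank_sum_cap -/C cap0 mxrank0 addn0.
  apply/eqP; rewrite eqn_leq rank_leq_col /=.
  rewrite -{1}(mxrank1 R M); apply: mxrankS.
  have -> : (1%:M : 'M[R]_M) = a^-1 *: (Fmx Phi S + Fmx Phi (~: S)).
    by rewrite hF scale_scalar_mx mulVf ?gt_eqF.
  by rewrite scalemx_sub // addmx_sub_adds // /Fmx submxMl.
have r1M : (r1 < M)%N.
  rewrite ltn_neqAle rank_leq_col andbT; apply/negP => /eqP h1.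
  have : (u <= Amx Phi S)%MS by apply: submx_full; rewrite /row_full -/r1 h1.
  by move/(perp_sub_eq0 huS)/eqP; rewrite (negPf hu).
have r2M : (r2 < M)%N.
  rewrite ltn_neqAle rank_leq_col andbT; apply/negP => /eqP h1.
  have : (v <= Amx Phi (~: S))%MS by apply: submx_full; rewrite /row_full -/r2 h1.
  by move/(perp_sub_eq0 hvS')/eqP; rewrite (negPf hv).
have r1p : (0 < r1)%N by rewrite lt0n; apply/eqP => h1; move: hsum r2M; rewrite h1 add0n => ->; rewrite ltnn.
have hcard : (#|S| + #|~: S|)%N = N by rewrite cardsC card_ord.
have hreal : (M * #|S|)%N = (N * r1)%N.
  apply/eqP; rewrite -(eqr_nat R) !natrM.
  have -> : (N%:R : R) = #|S|%:R + #|~: S|%:R by rewrite -natrD hcard.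
  have -> : (M%:R : R) = r1%:R + r2%:R by rewrite -natrD hsum.
  rewrite t1 t2; apply/eqP; ring.
have : (M %| N * r1)%N by rewrite -hreal dvdn_mulr.
rewrite Gauss_dvdr // => /(dvdn_leq r1p); rewrite leqNgt r1M //.
Qed.
Lemma sum_subseq (R : realType) (T : eqType) (s s' : seq T) (v : T -> R) :
  uniq s -> uniq s' -> {subset s <= s'} -> (forall t, 0 <= v t) ->
  \sum_(t <- s) v t <= \sum_(t <- s') v t.
Proof.
move=> us us' ss' v0.
have -> : \sum_(t <- s) v t = \sum_(t <- s' | t \in s) v t.
  have hp : perm_eq s [seq t <- s' | t \in s].
    apply: uniq_perm => //; first by rewrite filter_uniq.
    by move=> t; rewrite mem_filter; case: (boolP (t \in s)) => // /ss' ->.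
  by rewrite -[RHS]big_filter (perm_big _ hp).
rewrite [X in _ <= X](bigID (fun t => t \in s)) /= lerDl.
by apply: sumr_ge0 => t _.
Qed.

Lemma box_vol0 (R : realType) M : (0 < M)%N -> box_vol (0 : 'rV[R]_M) 0 = 0.
Proof.
move=> hM; rewrite /box_vol (bigD1 (Ordinal hM)) //= !mxE subrr mul0r //.
Qed.

Lemma box_vol_ge0 (R : realType) M (a b : 'rV[R]_M) :
  (forall i, a 0 i <= b 0 i) -> 0 <= box_vol a b.
Proof. by move=> h; apply: prodr_ge0 => i _; rewrite subr_ge0. Qed.

Lemma sum_pmap (R : realType) (T : Type) (U : Type) (f : T -> option U) (g : U -> R) s :
  \sum_(k <- s) oapp g 0 (f k) = \sum_(t <- pmap f s) g t.
Proof.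
elim: s => [|x s IH]; first by rewrite !big_nil.
rewrite big_cons /= IH; case: (f x) => [t|] /=; last by rewrite add0r.
by rewrite big_cons.
Qed.

Lemma cover_count (R : realType) M (hM : (0 < M)%N) (T : countType)
  (a b : T -> 'rV[R]_M) (P : 'rV[R]_M -> Prop) (e : R) :
  (forall t i, a t 0 i <= b t 0 i) ->
  (forall x, P x -> exists t, in_box (a t) (b t) x) ->
  (forall s : seq T, uniq s -> \sum_(t <- s) box_vol (a t) (b t) <= e) ->
  exists a' b' : nat -> 'rV[R]_M,
      (forall k i, a' k 0 i <= b' k 0 i) /\
      (forall x, P x -> exists k, in_box (a' k) (b' k) x) /\
      (forall K, \sum_(k < K) box_vol (a' k) (b' k) <= e).
Proof.
move=> hab hcov hsum.
exists (fun k => oapp a 0 (pickle_inv k)), (fun k => oapp b 0 (pickle_inv k)).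
split; [|split].
- move=> k i; case: (pickle_inv k) => [t|] //=; by rewrite mxE.
- move=> x /hcov [t ht]; exists (pickle t); by rewrite pickleK_inv.
- move=> K.
  have -> : \sum_(k < K) box_vol (oapp a 0 (pickle_inv k)) (oapp b 0 (pickle_inv k))
      = \sum_(k <- iota 0 K) oapp (fun t => box_vol (a t) (b t)) 0 (pickle_inv k).
    have -> : iota 0 K = index_iota 0 K by rewrite /index_iota subn0.
    rewrite big_mkord; apply: eq_bigr => k _.
    by case: (pickle_inv k) => [t|] //=; rewrite box_vol0.
  rewrite sum_pmap; apply: hsum; apply: pmap_uniq (iota_uniq 0 K).
  exact: pickle_invK.
Qed.

Lemma null_mono (R : realType) M (P Q : 'rV[R]_M -> Prop) :
  (forall x, P x -> Q x) -> lebesgue_null Q -> lebesgue_null P.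
Proof.
move=> hPQ hQ e he; have [a [b [h1 [h2 h3]]]] := hQ e he.
by exists a, b; split; [|split] => // x /hPQ /h2.
Qed.

Lemma geom_sum (R : realType) (e : R) B : 0 <= e ->
  \sum_(n < B) e / 2 ^+ n.+1 <= e.
Proof.
move=> he.
suff : \sum_(n < B) e / 2 ^+ n.+1 = e - e / 2 ^+ B.
  move=> ->; rewrite lerBlDr lerDl; apply: divr_ge0 => //; exact: exprn_ge0.
elim: B => [|B IH]; first by rewrite big_ord0 expr0 divr1 subrr.
rewrite big_ord_recr /= IH exprS.
have h2 : (2 : R) ^+ B != 0 by rewrite expf_neq0 // pnatr_eq0.
field.
exact: h2.
Qed.

Lemma null_union (R : realType) M (hM : (0 < M)%N) (P : nat -> 'rV[R]_M -> Prop) :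
  (forall n, lebesgue_null (P n)) -> lebesgue_null (fun x => exists n, P n x).
Proof.
move=> hP e he.
have he' : forall n : nat, 0 < e / 2 ^+ n.+1.
  by move=> n; apply: divr_gt0 => //; apply: exprn_gt0.
pose c := fun n => constructive_indefinite_description _ (hP n _ (he' n)).
pose A := fun n => proj1_sig (c n).
pose B := fun n => proj1_sig (constructive_indefinite_description _ (proj2_sig (c n))).
have hAB : forall n, (forall k i, A n k 0 i <= B n k 0 i) /\
      (forall x, P n x -> exists k, in_box (A n k) (B n k) x) /\
      (forall K, \sum_(k < K) box_vol (A n k) (B n k) <= e / 2 ^+ n.+1).
  move=> n; rewrite /B /A.
  by case: (constructive_indefinite_description _ (proj2_sig (c n))).
apply: (@cover_count R M hM _ (fun t => A t.1 t.2) (fun t => B t.1 t.2)).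
- by move=> [n k] i; have [h _] := hAB n; apply: h.
- move=> x [n hn]; have [_ [h _]] := hAB n; have [k hk] := h x hn.
  by exists (n, k).
- move=> s us.
  pose Bd := (\sum_(t <- s) (t.1 + t.2)).+1.
  have hbd : forall t, t \in s -> (t.1 < Bd)%N /\ (t.2 < Bd)%N.
    move=> t ts.
    have ht : (t.1 + t.2 <= \sum_(t <- s) (t.1 + t.2))%N by rewrite (big_rem t ts) /= leq_addr.
    rewrite /Bd; split; rewrite ltnS; apply: leq_trans ht; [exact: leq_addr | exact: leq_addl].
  set s' := [seq (x, y) | x <- iota 0 Bd, y <- iota 0 Bd].
  apply: le_trans; first apply: (@sum_subseq R _ s s' (fun t => box_vol (A t.1 t.2) (B t.1 t.2)) us).
  + by rewrite allpairs_uniq ?iota_uniq // => [[x1 y1]] [x2 y2] _ _ [-> ->].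
  + move=> [x y] /hbd [hx hy]; apply: allpairs_f; by rewrite mem_iota.
  + move=> [n k]; apply: box_vol_ge0 => i; have [h _] := hAB n; exact: h.
  rewrite big_allpairs.
  apply: (le_trans _ (geom_sum Bd (ltW he))).
  have -> : iota 0 Bd = index_iota 0 Bd by rewrite /index_iota subn0.
  rewrite big_mkord; apply: ler_sum => n _; have [_ [_ h]] := hAB n.
  by rewrite big_mkord; apply: h.
Qed.
Lemma grid_pt (R : realType) (m : nat) (y : R) :
  0 <= y -> y <= m.+1%:R ->
  (minn (Num.Def.truncn y) m)%:R <= y <= (minn (Num.Def.truncn y) m)%:R + 1.
Proof.
move=> y0 y1; have /andP [h1 h2] := truncn_itv y0.
case: (leqP (Num.Def.truncn y) m) => hk.
  rewrite h1 /=; rewrite -natr1 in h2; exact: ltW.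
apply/andP; split.
  apply: le_trans h1; rewrite ler_nat; exact: ltnW.
by rewrite natr1.
Qed.

Lemma hyper_piece (R : realType) M (hM : (0 < M)%N) (c : 'rV[R]_M) (j : 'I_M)
  (hcj : c 0 j != 0) (r : nat) :
  lebesgue_null (fun x => dotp c x = 0 /\ forall i, `|x 0 i| <= r.+1%:R).
Proof.
move=> e he.
set Rr : R := r.+1%:R.
have hRr : 0 < Rr by rewrite ltr0n.
set Sg := \sum_i `|c 0 i|.
have hcj' : 0 < `|c 0 j| by rewrite normr_gt0.
have hSg : 0 <= Sg by apply: sumr_ge0 => i _.
set K0 := \prod_(i | i != j) (2 * Rr).
have hK0 : 0 <= K0 by apply: prodr_ge0 => i _; apply: mulr_ge0 => //; exact: ltW.
set Q := 4 * Sg * Rr * K0 / `|c 0 j|.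
have hQ : 0 <= Q.
  apply: divr_ge0; last exact: ltW.
  exact: (mulr_ge0 (mulr_ge0 (mulr_ge0 (ler0n _ 4) hSg) (ltW hRr)) hK0).
set X := Q / e.
have hX : 0 <= X by apply: divr_ge0 => //; exact: ltW.
set m := Num.Def.truncn X.
set n := m.+1.
have hXn : X < n%:R by have /andP [_ ->] := truncn_itv hX.
have hn : (0 : R) < n%:R by rewrite ltr0n.
set d : R := 2 * Rr / n%:R.
have hd : 0 < d by apply: divr_gt0 => //; apply: mulr_gt0.
set h : R := Sg * d / `|c 0 j|.
have hh : 0 <= h by apply: divr_ge0; [apply: mulr_ge0 => //; exact: ltW| exact: ltW].
pose p (f : {ffun 'I_M -> 'I_n}) (i : 'I_M) : R := - Rr + (f i)%:R * d.
pose ctr (f : {ffun 'I_M -> 'I_n}) : R := - (\sum_(i | i != j) c 0 i * p f i) / c 0 j.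
pose a (f : {ffun 'I_M -> 'I_n}) : 'rV[R]_M :=
  \row_i (if i == j then ctr f - h else p f i).
pose b (f : {ffun 'I_M -> 'I_n}) : 'rV[R]_M :=
  \row_i (if i == j then (if f j == ord0 then ctr f + h else ctr f - h) else p f i + d).
have hab : forall f i, a f 0 i <= b f 0 i.
  move=> f i; rewrite !mxE; case: eqP => _.
    case: eqP => _; last exact: lexx.
    by lra.
  by rewrite lerDl; exact: ltW.
have hnd : n%:R * d = 2 * Rr by rewrite /d mulrC divfK ?gt_eqF.
apply: (@cover_count R M hM _ a b) => //.
- move=> x [hx hb].
  pose f : {ffun 'I_M -> 'I_n} := [ffun i => if i == j then ord0
     else inord (minn (Num.Def.truncn ((x 0 i + Rr) / d)) m)].
  exists f.
  have hpi : forall i, i != j -> p f i <= x 0 i <= p f i + d.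
    move=> i hij; rewrite /p ffunE (negPf hij) inordK; last by rewrite ltnS geq_minr.
    have /andP [xl xu] : - Rr <= x 0 i <= Rr by rewrite -ler_norml.
    set y := (x 0 i + Rr) / d.
    have y0 : 0 <= y by apply: divr_ge0; [lra | exact: ltW].
    have y1 : y <= m.+1%:R by rewrite ler_pdivrMr // hnd; lra.
    have hxy : x 0 i = - Rr + y * d by rewrite /y divfK ?gt_eqF //; ring.
    have := grid_pt y0 y1; set k := minn _ _; move=> /andP [k1 k2].
    rewrite hxy; apply/andP; split; nra.
  move=> i; rewrite !mxE; case: (eqVneq i j) => [->|hij]; last first.
    exact: hpi.
  rewrite ffunE !eqxx -ler_distl.
  have hsum : c 0 j * x 0 j = - \sum_(i | i != j) c 0 i * x 0 i.
    apply/eqP; rewrite -addr_eq0; apply/eqP; by rewrite -[RHS]hx /dotp [in RHS](bigD1 j).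
  have heq : x 0 j - ctr f = (\sum_(i | i != j) c 0 i * (p f i - x 0 i)) / c 0 j.
    under eq_bigr do rewrite mulrBr.
    rewrite sumrB /ctr.
    have -> : x 0 j = (c 0 j * x 0 j) / c 0 j by rewrite mulrC mulKf.
    rewrite hsum; field; exact: hcj.
  rewrite heq normf_div ler_pdivrMr // /h divfK ?gt_eqF //.
  apply: (le_trans (ler_norm_sum _ _ _)).
  apply: (@le_trans _ _ (\sum_(i | i != j) `|c 0 i| * d)).
    apply: ler_sum => k hk; rewrite normrM; apply: ler_wpM2l => //.
    have /andP [l1 l2] := hpi k hk; rewrite ler_norml; apply/andP; split; lra.
  rewrite /Sg -mulr_suml ler_wpM2r //; first exact: ltW.
  rewrite [X in _ <= X](bigD1 j) //= lerDr //.
- move=> s us.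
  apply: le_trans; first apply: (@sum_subseq R _ s (enum {ffun 'I_M -> 'I_n})
     (fun t => box_vol (a t) (b t)) us (enum_uniq _)).
  + by move=> t _; rewrite mem_enum.
  + by move=> t; apply: box_vol_ge0 => i; exact: hab.
  rewrite big_enum /=.
  pose F := fun (i : 'I_M) (t : 'I_n) =>
     if i == j then (if t == ord0 then 2 * h else 0) else d.
  have hv : forall f, box_vol (a f) (b f) = \prod_i F i (f i).
    move=> f; rewrite /box_vol; apply: eq_bigr => i _; rewrite !mxE /F.
    case: eqP => [->|_]; last by ring.
    by case: eqP => _; ring.
  under eq_bigr do rewrite hv.
  rewrite -(bigA_distr_bigA F) (bigD1 j) //=.
  have -> : \sum_t F j t = 2 * h.
    rewrite /F eqxx -big_mkcond /=.
    by rewrite (big_pred1_eq _ (ord0 : 'I_n)).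
  have -> : \prod_(i | i != j) \sum_t F i t = K0.
    apply: eq_bigr => i hij; rewrite /F (negPf hij) sumr_const card_ord.
    by rewrite -[LHS]mulr_natr mulrC hnd.
  have hQn : Q < n%:R * e by rewrite -ltr_pdivrMr.
  have -> : 2 * h * K0 = Q / n%:R.
    rewrite /h /d /Q; field; apply/andP; split; rewrite gt_eqF //.
  by rewrite ler_pdivrMr // mulrC; exact: ltW.
Qed.

Lemma hyper_null (R : realType) M (hM : (0 < M)%N) (c : 'rV[R]_M) :
  c != 0 -> lebesgue_null (fun x => dotp c x = 0).
Proof.
move=> hc.
have [j hj] : exists j, c 0 j != 0.
  have : [exists j, c 0 j != 0].
    apply: contraNT hc => /existsPn h; apply/eqP/rowP => j.
    by rewrite mxE; apply/eqP; move: (h j); rewrite negbK.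
  by move=> /existsP.
apply: (@null_mono R M _ (fun x => exists r, dotp c x = 0 /\ forall i, `|x 0 i| <= r.+1%:R)).
  move=> x hx; exists (\sum_(i < M) Num.Def.truncn `|x 0 i|); split => // i.
  have /andP [_ h2] := truncn_itv (normr_ge0 (x 0 i)).
  apply: (le_trans (ltW h2)); rewrite ler_nat ltnS.
  by rewrite (bigD1 i) //= leq_addr.
apply: null_union => // r; exact: (@hyper_piece R M hM c j hj r).
Qed.

Lemma dotpNl (R : realType) M (x y : 'rV[R]_M) : dotp (- x) y = - dotp x y.
Proof. by rewrite /dotp -sumrN; apply: eq_bigr => i _; rewrite mxE mulNr. Qed.

Lemma dotpDr (R : realType) M (x y z : 'rV[R]_M) : dotp z (x + y) = dotp z x + dotp z y.
Proof. by rewrite dotpC dotpDl !(dotpC z). Qed.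

Definition Tset (R : realType) M N (Phi : 'I_N -> 'rV[R]_M) (S : {set 'I_N}) (x : 'rV[R]_M) :=
  exists u v : 'rV[R]_M, u != 0 /\ v != 0 /\
    (forall n, n \in S -> dotp u (Phi n) = 0) /\
    (forall n, n \notin S -> dotp v (Phi n) = 0) /\ x *+ 2 = u + v.

Lemma false_null (R : realType) M (hM : (0 < M)%N) :
  lebesgue_null (fun _ : 'rV[R]_M => False).
Proof.
apply: (@null_mono R M _ (fun x => dotp (delta_mx 0 (Ordinal hM)) x = 0)) => //.
apply: hyper_null => //; apply/eqP => /rowP /(_ (Ordinal hM)); rewrite !mxE !eqxx /=.
by move/eqP; rewrite oner_eq0.
Qed.

Unset Implicit Arguments.
Theorem theorem13 (R : realType) (M N : nat)
    (hM : (0 < M)%N) (hN : (0 < N)%N) (hcop : coprime M N)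
    (Phi : 'I_N -> 'rV[R]_M) (hPhi : unit_norm_tight_frame Phi) :
  ae_rV (fun x : 'rV[R]_M =>
    forall y : 'rV[R]_M, intensity Phi y = intensity Phi x -> y = x \/ y = - x).
Proof.
move: hPhi => [hn1 [a [ha ht]]].
have dpos : forall x : 'rV[R]_M, 0 <= dotp x x.
  by move=> x; apply: sumr_ge0 => i _; rewrite -expr2 sqr_ge0.
have hn : forall n, dotp (Phi n) (Phi n) = 1.
  by move=> n; have := hn1 n; rewrite /enorm => h; rewrite -(sqr_sqrtr (dpos _)) h expr1n.
have ht' : forall x, \sum_n dotp x (Phi n) ^+ 2 = a * dotp x x.
  move=> x; rewrite -(sqr_sqrtr (dpos x)) -[Num.sqrt _]/(enorm x) -ht.
  by apply: eq_bigr => n _; rewrite real_normK // num_real.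
have hFT := FmxT ht'.
pose Tn := fun (k : nat) (x : 'rV[R]_M) =>
  match (pickle_inv k : option {set 'I_N}) with Some SS => Tset Phi SS x | None => False end.
apply: (@null_mono R M _ (fun x => exists k, Tn k x)).
  move=> x hx; apply: NNPP => hne; apply: hx => y hy.
  case: (eqVneq y x) => [-> | hyx]; first by left.
  case: (eqVneq y (- x)) => [-> | hyx']; first by right.
  exfalso; apply: hne.
  set u := x + y; set v := x - y.
  set S := [set n | dotp u (Phi n) == 0].
  exists (pickle S); rewrite /Tn pickleK_inv.
  exists u, v; split; [|split; [|split; [|split]]].
  - rewrite /u addr_eq0; apply: contra hyx' => /eqP ->; by rewrite opprK.
  - rewrite /v subr_eq0 eq_sym //.
  - by move=> n; rewrite inE => /eqP.
  - move=> n; rewrite inE => hun.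
    have e1 := congr1 (fun f => f n) hy; rewrite /intensity /= !real_normK ?num_real // in e1.
    have : dotp u (Phi n) * dotp v (Phi n) = 0.
      rewrite /u /v dotpDl dotpDl dotpNl.
      by rewrite mulrC -subr_sqr e1 subrr.
    by move/eqP; rewrite mulf_eq0 (negPf hun) /= => /eqP.
  - by rewrite /u /v addrACA subrr addr0 mulr2n.
apply: null_union => // k; rewrite /Tn.
case: (pickle_inv k) => [S|]; last exact: false_null.
case: (classic (exists x, Tset Phi S x)) => [[x0 [u [v [hu [hv [huS [hvS _]]]]]]]|hno]; last first.
  by apply: (@null_mono R M _ (fun _ => False)); [move=> x hx; apply: hno; exists x | exact: false_null].
have [c [hc [hc1 hc2]]] := la_main ha hFT hn hcop hu hv huS hvS.
apply: (@null_mono R M _ (fun x => dotp c x = 0)); last exact: hyper_null.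
move=> x [u' [v' [_ [_ [huS' [hvS' hx]]]]]].
have hvS'' : forall n, n \in ~: S -> dotp v' (Phi n) = 0.
  by move=> n; rewrite in_setC; apply: hvS'.
have : dotp c (x *+ 2) = 0 by rewrite hx dotpDr (sub_perp huS' hc1) (sub_perp hvS'' hc2) addr0.
rewrite mulr2n dotpDr => h; lra.
Qed.
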